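(* A regular Hausdorff space $X$ is a $\gamma$-space if and only if $\mathcal{F}(X)$ is a $\gamma$-space.
   Context: $\mathcal{F}(X)$ is the set of nonempty finite subsets of $X$ with the Vietoris topology (base: $\langle U_1,\dots,U_k\rangle=\{A: A\subset\bigcup_i U_i,\ A\cap U_j\neq\emptyset\ \forall j\}$, $U_i$ open in $X$). A space $(Y,\tau_Y)$ is a $\gamma$-space if there is a function $g:\omega\times Y\to\tau_Y$ such that (i) $\{g(n,x): n\in\omega\}$ is a neighborhood base at $x$ for each $x\in Y$, and (ii) for each $n\in\omega$ and $x\in Y$ there is $m\in\omega$ such that $y\in g(m,x)$ implies $g(n,y)\subset g(n,x)$. *)

(* Defs.v *)
From HB Require Import structures.
From mathcomp Require Import all_boot all_order all_algebra.
From mathcomp Require Import all_classical all_reals all_analysis.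
From Stdlib Require List.
Set Implicit Arguments. Unset Strict Implicit. Unset Printing Implicit Defensive.
Local Open Scope classical_set_scope.

Definition nbhd_in (Y : Type) (op : set (set Y)) (y : Y) (N : set Y) : Prop :=
  exists U, op U /\ U y /\ U `<=` N.

Definition gamma_space_in (Y : Type) (op : set (set Y)) : Prop :=
  exists g : nat -> Y -> set Y,
    (forall n x, op (g n x)) /\
    (forall x, (forall n, nbhd_in op x (g n x)) /\
               (forall N, nbhd_in op x N -> exists n, g n x `<=` N)) /\
    (forall n x, exists m, forall y, g m x y -> g n y `<=` g n x).

Definition gamma_space (X : topologicalType) : Prop := gamma_space_in (@open X).

Definition finsub (X : Type) := {A : set X | finite_set A /\ A !=set0}.

Definition vietoris_basic (X : Type) (s : seq (set X)) : set (finsub X) :=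
  [set A | (proj1_sig A `<=` \bigcup_(U in [set U | List.In U s]) U) /\
           (forall U, List.In U s -> proj1_sig A `&` U !=set0)].

Definition vietoris_open (X : topologicalType) : set (set (finsub X)) :=
  [set W | forall A, W A -> exists s : seq (set X),
     (forall U, List.In U s -> open U) /\ vietoris_basic s A /\
     vietoris_basic s `<=` W].

(* Main.v *)
Require Import Defs.
From HB Require Import structures.
From mathcomp Require Import all_boot all_order all_algebra.
From mathcomp Require Import all_classical all_reals all_analysis.
From Stdlib Require List.
Local Open Scope classical_set_scope.

Lemma inP_list (T : eqType) (x : T) (l : seq T) : x \in l <-> List.In x l.
Proof.
elim: l => [|a l IH]; first by rewrite in_nil.
rewrite in_cons /=; split.
- by case/orP => [/eqP->|/IH]; [left|right].
- by case=> [->|/IH ->]; [rewrite eqxx| rewrite orbT].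
Qed.

Lemma finite_list (T : eqType) (A : set T) :
  finite_set A -> exists l : seq T, forall x, A x <-> List.In x l.
Proof. by move/finite_seqP => [s ->]; exists s => x; apply: inP_list. Qed.

Lemma list_max (T : Type) (P : nat -> T -> Prop) :
  (forall m m' t, (m <= m')%N -> P m t -> P m' t) ->
  forall l : list T, (forall t, List.In t l -> exists m, P m t) ->
  exists M, forall t, List.In t l -> P M t.
Proof.
move=> mono; elim=> [|a l IH] H; first by exists 0%N.
have [m1 Hm1] := H a (or_introl erefl).
have [m2 Hm2] := IH (fun t Ht => H t (or_intror Ht)).
exists (maxn m1 m2) => t [<-|Ht].
- by apply: mono Hm1; exact: leq_maxl.
- by apply: mono (Hm2 _ Ht); exact: leq_maxr.
Qed.

Fixpoint hdec {Y : Type} (g : nat -> Y -> set Y) n x :=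
  match n with 0 => g 0%N x | S k => hdec g k x `&` g (S k) x end.

Lemma hdec_sub (Y : Type) g n (x : Y) : hdec g n x `<=` g n x.
Proof. by case: n => [|n] //= y []. Qed.

Lemma hdec_mono (Y : Type) g n m (x : Y) : (n <= m)%N -> hdec g m x `<=` hdec g n x.
Proof.
move=> /subnK <-; elim: (m - n)%N => [|k IH] //=.
by move=> y /= [/IH].
Qed.

Lemma hdec_le (Y : Type) g n i (x : Y) : (i <= n)%N -> hdec g n x `<=` g i x.
Proof. by move=> H y Hy; apply: hdec_sub; apply: (@hdec_mono _ g i n x H). Qed.

Lemma gamma_dec (Y : Type) (op : set (set Y)) : setI_closed op ->
  gamma_space_in op -> exists g : nat -> Y -> set Y,
  (forall n x, op (g n x)) /\ (forall n x, g n x x) /\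
  (forall x N, nbhd_in op x N -> exists n, g n x `<=` N) /\
  (forall n x, exists m, forall y, g m x y -> g n y `<=` g n x) /\
  (forall n m x, (n <= m)%N -> g m x `<=` g n x).
Proof.
move=> opI [g [Hop [Hb Hii]]].
have gx : forall i x, g i x x.
  by move=> i x; have [U [_ [Ux sub]]] := (Hb x).1 i; exact: sub.
exists (hdec g); split; [|split; [|split; [|split]]].
- by elim=> [|n IH] x //=; apply: opI.
- by elim=> [|n IH] x //=; split.
- move=> x N HN; have [n Hn] := (Hb x).2 N HN.
  by exists n; apply: subset_trans Hn; apply: hdec_sub.
- move=> n x; elim: n => [|n [m1 H1]].
  + by have [m0 H0] := Hii 0%N x; exists m0 => y Hy; apply: H0; apply: hdec_sub Hy.
  + have [m2 H2] := Hii n.+1 x; exists (maxn m1 m2) => y Hy z /= [Hz1 Hz2]; split.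
    * by apply: (H1 y) Hz1; apply: hdec_mono Hy; exact: leq_maxl.
    * by apply: (H2 y) Hz2; apply: hdec_le Hy; exact: leq_maxr.
- by move=> n m x; apply: hdec_mono.
Qed.

Definition sing {X : Type} (x : X) : finsub X :=
  exist _ [set x] (conj (finite_set1 x) (ex_intro _ x erefl)).

Lemma inter_open (X : topologicalType) (s : seq (set X)) :
  (forall U, List.In U s -> open U) -> open [set z | forall U, List.In U s -> U z].
Proof.
elim: s => [|a s IH] Hs.
  have -> : [set z : X | forall U, List.In U [::] -> U z] = setT.
    by apply/seteqP; split => // z _ U [].
  exact: openT.
have -> : [set z | forall U, List.In U (a :: s) -> U z] =
          a `&` [set z | forall U, List.In U s -> U z].
  apply/seteqP; split => z /=.
  - by move=> H; split; [apply: H; left | move=> U HU; apply: H; right].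
  - by move=> [az H] U [<-|HU] //; apply: H.
apply: openI; first by apply: Hs; left.
by apply: IH => U HU; apply: Hs; right.
Qed.

Theorem theorem4p10 (X : topologicalType) :
  regular_space X -> hausdorff_space X ->
  (gamma_space X <-> gamma_space_in (@vietoris_open X)).
Proof.
move=> _ _; split.
- move=> /(@gamma_dec _ _ (@openI X)) [g [Hop [gx [Hb [Hii Hdec]]]]].
  pose G n (A : finsub X) : set (finsub X) :=
    [set C | proj1_sig C `<=` \bigcup_(a in proj1_sig A) g n a /\
             forall a, proj1_sig A a -> proj1_sig C `&` g n a !=set0].
  have GA : forall n A, G n A A.
    move=> n A; split; first by move=> a Aa; exists a.
    by move=> a Aa; exists a.
  have Gopen : forall n A, vietoris_open (G n A).
    move=> n A C HC.
    have [l Hl] := @finite_list _ _ (proj1 (proj2_sig A)).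
    have Hs : forall U, List.In U (List.map (g n) l) <-> exists a, g n a = U /\ proj1_sig A a.
      move=> U; rewrite List.in_map_iff; split => -[a [e Ha]]; exists a; split => //.
        by apply/Hl. by apply/Hl.
    have eqG : forall D, vietoris_basic (List.map (g n) l) D <-> G n A D.
      move=> D; split.
      + move=> [H1 H2]; split.
        * move=> d /H1 [U /Hs [a [<- Aa]] Ud]; by exists a.
        * move=> a Aa; apply: H2; apply/Hs; by exists a.
      + move=> [H1 H2]; split.
        * move=> d /H1 [a Aa gd]; exists (g n a) => //; apply/Hs; by exists a.
        * by move=> U /Hs [a [<- Aa]]; apply: H2.
    exists (List.map (g n) l); split; last split.
    + by move=> U /Hs [a [<- _]]; apply: Hop.
    + by apply/eqG.
    + by move=> D /eqG.
  exists G; split; first exact: Gopen.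
  split.
  + move=> A; split.
    * by move=> n; exists (G n A); split; [exact: Gopen | split].
    * move=> N [W [HW [WA WN]]].
      have [s [sop [sA sW]]] := HW A WA.
      have [l Hl] := @finite_list _ _ (proj1 (proj2_sig A)).
      have [M HM] : exists M, forall a, List.In a l ->
          forall U, List.In U s -> U a -> g M a `<=` U.
        apply: list_max.
          move=> m m' a le H U HU Ua; apply: subset_trans (Hdec _ _ _ le) _.
          exact: H.
        move=> a _; apply: (@list_max _ (fun n U => U a -> g n a `<=` U)).
          move=> m m' U le H Ua; apply: subset_trans (Hdec _ _ _ le) _; exact: H.
        move=> U HU; case: (pselect (U a)) => Ua; last by exists 0%N.
        have [n Hn] := Hb a U (ex_intro _ U (conj (sop U HU) (conj Ua (@subset_refl _ U)))).
        by exists n.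
      exists M => C [C1 C2]; apply: WN; apply: sW; split.
      - move=> c /C1 [a Aa gac].
        have [U HU Ua] := sA.1 a Aa.
        exists U => //; apply: (HM a _ U HU Ua) => //; exact/Hl.
      - move=> U HU; have [a [Aa Ua]] := sA.2 U HU.
        have [c [Cc gc]] := C2 a Aa.
        exists c; split => //; apply: (HM a _ U HU Ua) => //; exact/Hl.
  + move=> n A.
    have [l Hl] := @finite_list _ _ (proj1 (proj2_sig A)).
    have [M HM] : exists M, forall a, List.In a l ->
        forall y, g M a y -> g n y `<=` g n a.
      apply: list_max.
        by move=> m m' a le H y /(Hdec _ _ _ le) /H.
      move=> a _; exact: Hii.
    exists M => B [B1 B2] C [C1 C2]; split.
    * move=> c /C1 [b Bb gbc].
      have [a Aa gab] := B1 b Bb.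
      exists a => //; apply: (HM a _ b gab) => //; exact/Hl.
    * move=> a Aa; have [b [Bb gab]] := B2 a Aa.
      have [c [Cc gbc]] := C2 b Bb.
      exists c; split => //; apply: (HM a _ b gab) => //; exact/Hl.
- move=> [G [Hop [Hb Hii]]].
  pose g (n : nat) (x : X) : set X := [set y : X | G n (sing x) (sing y)].
  have gopen : forall n x, open (g n x).
    move=> n x.
    have -> : g n x = \bigcup_(V in [set V | open V /\ V `<=` g n x]) V.
      apply/seteqP; split; last by move=> z [V [_ Vs] Vz]; apply: Vs.
      move=> y Hy.
      have [s [sop [[sb1 sb2] ssub]]] := Hop n (sing x) _ Hy.
      have yV : forall U, List.In U s -> U y.
        by move=> U HU; have [z [/= -> Uz]] := sb2 U HU.
      have [U0 HU0 _] := sb1 y erefl.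
      exists [set z | forall U, List.In U s -> U z] => //; split.
        exact: inter_open.
      move=> z Hz; apply: ssub; split.
      + by move=> w /= ->; exists U0 => //; apply: Hz.
      + by move=> U HU; exists z; split => //; apply: Hz.
    by apply: bigcup_open => V [].
  have gx : forall n x, g n x x.
    by move=> n x; have [W [_ [Wx sub]]] := (Hb (sing x)).1 n; exact: sub.
  exists g; split; first exact: gopen.
  split.
  + move=> x; split.
    * by move=> n; exists (g n x); split; [exact: gopen | split].
    * move=> N [U [Uo [Ux UN]]].
      pose W := [set C : finsub X | proj1_sig C `<=` U].
      have HW : vietoris_open W.
        move=> C HC; exists [:: U]; split; last split.
        - by move=> U' [<-|[]].
        - split; first by move=> c Cc; exists U => //; [left | apply: HC].
          move=> U' [<-|[]]; have [c Cc] := proj2 (proj2_sig C).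
          by exists c; split => //; apply: HC.
        - move=> D [D1 _] d /D1 [U' [<-|[]] //].
      have Wx : W (sing x) by move=> z /= ->.
      have [n Hn] := (Hb (sing x)).2 W (ex_intro _ W (conj HW (conj Wx (@subset_refl _ W)))).
      exists n => y Hy; apply: UN; exact: (Hn _ Hy y erefl).
  + move=> n x; have [m Hm] := Hii n (sing x).
    by exists m => y Hy z Hz; exact: Hm _ Hy _ Hz.
Qed.
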